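(* Let $\Phi$ be a 2-CNF, and let $\Psi$ be obtained from $\Phi$ by adding a single clause $e$ on the same variable set. Then $$\big|\log Z(\hat\Phi)-\log Z(\hat\Psi)\big|\le|\mathcal N(\Phi,e)|\log 2.$$
   Context: A 2-CNF is a conjunction of clauses, each the disjunction of two literals on two distinct variables. $Z(\cdot)$ is the number of satisfying assignments. **Unit Clause Propagation.** For a 2-CNF $\Phi$ and a set $\mathcal L_0$ of literals, $\mathcal L(\Phi,\mathcal L_0)$ is the closure of $\mathcal L_0$ under: if $\Phi$ has a clause $l\vee\neg l'$ with $l'\in\mathcal L$, add $l$. **Pruning.** Conflict clauses $\mathcal C(\Phi,\mathcal L_0)$ are the clauses of $\Phi$ both of whose variables $x$ satisfy $x,\neg x\in\mathcal L(\Phi,\mathcal L_0)$. The pruned formula $\hat\Phi$ is $\Phi$ with all clauses of $\bigcup_l\mathcal C(\Phi,\{l\})$ removed, $l$ ranging over all literals. Pruned formulas are satisfiable. **The set $\mathcal N(\Phi,e)$.** For a variable $v$, $\mathcal N(\Phi,v)$ is the set of literals $l$ with $\{v,\neg v\}\cap\mathcal L(\Phi,\{l\})\ne\emptyset$. If $v,v'$ are the two variables of $e$, then $$\mathcal N(\Phi,e)=\bigcup_{l\in\mathcal N(\Phi,v)\cup\mathcal N(\Phi,v')}\mathcal L(\Phi,\{l\}),$$ a set of literals. *)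

(* Defs.v *)
From mathcomp Require Import all_boot.
From Stdlib Require Import Reals.
Set Implicit Arguments. Unset Strict Implicit. Unset Printing Implicit Defensive.

Section TwoCNF.
Variable n : nat.

(* A literal on variables 'I_n: (x, true) is x, (x, false) is ~x. *)
Definition lit := ('I_n * bool)%type.
Definition neg (l : lit) : lit := (l.1, ~~ l.2).

Definition clause := (lit * lit)%type.
Definition wf_clause (c : clause) : bool := c.1.1 != c.2.1.
Definition is2CNF (Phi : seq clause) : bool := all wf_clause Phi.

Definition lit_sat (s : {ffun 'I_n -> bool}) (l : lit) : bool := s l.1 == l.2.
Definition clause_sat s (c : clause) : bool := lit_sat s c.1 || lit_sat s c.2.
Definition Zcount (Phi : seq clause) : nat :=
  #|[set s : {ffun 'I_n -> bool} | all (clause_sat s) Phi]|.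

(* Phi has a clause  l \/ ~l'  (clauses are unordered disjunctions). *)
Definition has_clause (Phi : seq clause) (l l' : lit) : bool :=
  has (fun c => (c == (l, neg l')) || (c == (neg l', l))) Phi.

Definition up_closed (Phi : seq clause) (S : {set lit}) : bool :=
  [forall l, forall l', ((l' \in S) && has_clause Phi l l') ==> (l \in S)].

Definition UP (Phi : seq clause) (L0 : {set lit}) : {set lit} :=
  \bigcap_(S : {set lit} | (L0 \subset S) && up_closed Phi S) S.

Definition conflict_var (L : {set lit}) (x : 'I_n) : bool :=
  ((x, true) \in L) && ((x, false) \in L).

(* c is in C(Phi, L0) (membership of c in Phi checked separately) *)
Definition conflict_clause (Phi : seq clause) (L0 : {set lit}) (c : clause) : bool :=
  conflict_var (UP Phi L0) c.1.1 && conflict_var (UP Phi L0) c.2.1.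

(* hat Phi: remove every clause lying in some C(Phi, {l}). *)
Definition prune (Phi : seq clause) : seq clause :=
  [seq c <- Phi | ~~ [exists l : lit, conflict_clause Phi [set l] c]].

Definition Nvar (Phi : seq clause) (v : 'I_n) : {set lit} :=
  [set l : lit | ((v, true) \in UP Phi [set l]) || ((v, false) \in UP Phi [set l])].

Definition Nclause (Phi : seq clause) (e : clause) : {set lit} :=
  \bigcup_(l in Nvar Phi e.1.1 :|: Nvar Phi e.2.1) UP Phi [set l].

End TwoCNF.

(* Main.v *)
Require Import Defs.
From mathcomp Require Import all_boot.
From Stdlib Require Import Reals Lra.
Set Implicit Arguments.
Local Notation neg := Defs.neg. Unset Strict Implicit. Unset Printing Implicit Defensive.

Lemma negK {n} (l : lit n) : neg (neg l) = l.
Proof. by case: l => x s; rewrite /neg /= negbK. Qed.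

Lemma UP_sub {n} (Phi : seq (clause n)) (L0 : {set lit n}) : L0 \subset UP Phi L0.
Proof. by apply/bigcapsP => S /andP[]. Qed.

Lemma UP_min {n} (Phi : seq (clause n)) (L0 S : {set lit n}) :
  L0 \subset S -> up_closed Phi S -> UP Phi L0 \subset S.
Proof. by move=> h1 h2; apply: (@bigcap_inf _ _ S (fun S => (L0 \subset S) && up_closed Phi S) (fun S => S)); rewrite h1 h2. Qed.

Lemma UP_step {n} (Phi : seq (clause n)) (L0 : {set lit n}) l l' :
  l' \in UP Phi L0 -> has_clause Phi l l' -> l \in UP Phi L0.
Proof.
move=> /bigcapP h hc; apply/bigcapP => S hS; have /andP[s1 /forallP s2] := hS.
by apply: (implyP (forallP (s2 l) l')); rewrite hc andbT; apply: h.
Qed.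

Lemma UP_closed {n} (Phi : seq (clause n)) (L0 : {set lit n}) : up_closed Phi (UP Phi L0).
Proof. by apply/forallP => l; apply/forallP => l'; apply/implyP => /andP[h1 h2]; apply: UP_step h2. Qed.

Lemma UP_self {n} (Phi : seq (clause n)) l : l \in UP Phi [set l].
Proof. by move/subsetP: (UP_sub Phi [set l]); apply; rewrite set11. Qed.

Lemma UP_trans {n} (Phi : seq (clause n)) l m :
  m \in UP Phi [set l] -> UP Phi [set m] \subset UP Phi [set l].
Proof. by move=> h; apply: UP_min (UP_closed _ _); rewrite sub1set. Qed.

Lemma closedP {n} (Phi : seq (clause n)) (S : {set lit n}) :
  (forall l l', l' \in S -> has_clause Phi l l' -> l \in S) -> up_closed Phi S.
Proof. by move=> h; apply/forallP => l; apply/forallP => l'; apply/implyP => /andP[h1 h2]; apply: h h2. Qed.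

Lemma has_clause_mono {n} (G Phi : seq (clause n)) l l' :
  {subset G <= Phi} -> has_clause G l l' -> has_clause Phi l l'.
Proof. by move=> s /hasP[c cG hc]; apply/hasP; exists c; first exact: s. Qed.

Lemma UP_mono {n} (G Phi : seq (clause n)) (L0 : {set lit n}) :
  {subset G <= Phi} -> UP G L0 \subset UP Phi L0.
Proof.
move=> s; apply: UP_min (UP_sub _ _) _; apply: closedP => l l' h hc.
by apply: UP_step h _; apply: has_clause_mono hc.
Qed.

Lemma has_clause_neg {n} (Phi : seq (clause n)) l l' :
  has_clause Phi l l' -> has_clause Phi (neg l') (neg l).
Proof.
move=> /hasP[c cP hc]; apply/hasP; exists c => //; rewrite !negK.
by case/orP: hc => /eqP ->; rewrite eqxx ?orbT.
Qed.

Lemma UP_sym {n} (Phi : seq (clause n)) l m :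
  m \in UP Phi [set l] -> neg l \in UP Phi [set neg m].
Proof.
move=> h.
have : UP Phi [set l] \subset [set m | neg l \in UP Phi [set neg m]].
  apply: UP_min; first by rewrite sub1set inE UP_self.
  apply: closedP => a a'; rewrite !inE => h1 h2.
  by move/subsetP: (UP_trans (UP_step (UP_self Phi (neg a)) (has_clause_neg h2))); apply.
by move/subsetP => /(_ m h); rewrite inE.
Qed.

Lemma UP_first {n} (Phi : seq (clause n)) x l :
  l \in UP Phi [set x] -> l != x -> exists2 y, has_clause Phi y x & l \in UP Phi [set y].
Proof.
move=> h.
have : UP Phi [set x] \subset x |: \bigcup_(y | has_clause Phi y x) UP Phi [set y].
  apply: UP_min; first by rewrite sub1set setU11.
  apply: closedP => a a'; rewrite !inE => /orP[/eqP -> hc|/bigcupP[y hy ha] hc].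
    by apply/orP; right; apply/bigcupP; exists a => //; apply: UP_self.
  by apply/orP; right; apply/bigcupP; exists y => //; apply: UP_step hc.
move/subsetP => /(_ l h); rewrite !inE => /orP[->//|/bigcupP[y hy hl] _].
by exists y.
Qed.

Lemma conflictP {n} (S : {set lit n}) l : l \in S -> neg l \in S -> conflict_var S l.1.
Proof. by case: l => v [] /= h1 h2; rewrite /conflict_var ?h1 ?h2. Qed.

Lemma prune_sub {n} (Phi : seq (clause n)) : {subset prune Phi <= Phi}.
Proof. by move=> c; rewrite mem_filter => /andP[]. Qed.

Lemma prune_noconf {n} (Phi : seq (clause n)) c l :
  c \in prune Phi -> ~~ conflict_clause Phi [set l] c.
Proof.
rewrite mem_filter => /andP[/existsPn h _]; exact: h.
Qed.

Lemma neg_neq {n} (x : lit n) : neg x != x.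
Proof. by case: x => v s; rewrite /neg /= xpair_eqE eqxx /=; case: s. Qed.

Lemma prune_consistent {n} (Phi G : seq (clause n)) x y :
  {subset G <= prune Phi} -> y \in UP G [set x] -> neg y \in UP G [set x] -> False.
Proof.
move=> sG hy hny.
have GP : {subset G <= Phi} by move=> c /sG /prune_sub.
have hnx : neg x \in UP G [set x].
  have := UP_sym hny; rewrite negK => h.
  by move/subsetP: (UP_trans hy); apply.
have [y' hc hy'] := UP_first hnx (neg_neq x).
have := UP_sym hy'; rewrite negK => hny'.
have y'in : y' \in UP G [set x] by apply: UP_step hc; apply: UP_self.
move/hasP: hc => [c cG hc].
have := prune_noconf x (sG c cG); apply/negP/negPn.
have sub := subsetP (UP_mono [set x] GP).
rewrite /conflict_clause.
have c1 : conflict_var (UP Phi [set x]) y'.1.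
  by apply: conflictP; apply: sub.
have c2 : conflict_var (UP Phi [set x]) x.1.
  by apply: conflictP; apply: sub => //; apply: UP_self.
by case/orP: hc => /eqP -> /=; rewrite ?c1 ?c2.
Qed.

Definition inU {n} (U : {set lit n}) (v : 'I_n) := ((v,true) \in U) || ((v,false) \in U).
Definition over {n} (U : {set lit n}) (r : {ffun 'I_n -> bool}) : {ffun 'I_n -> bool} :=
  [ffun v => if (v,true) \in U then true else if (v,false) \in U then false else r v].

Lemma over_in {n} (U : {set lit n}) r l :
  (forall y, y \in U -> neg y \in U -> False) -> l \in U -> lit_sat (over U r) l.
Proof.
move=> cons; case: l => v [] h; rewrite /lit_sat ffunE /= h //.
case: ifP => // h'; exfalso; apply: (cons (v,false)) => //.
Qed.

Lemma over_out {n} (U : {set lit n}) r l :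
  ~~ inU U l.1 -> lit_sat (over U r) l = lit_sat r l.
Proof. by case: l => v s; rewrite /inU /lit_sat ffunE /= => /norP[/negbTE -> /negbTE ->]. Qed.

Lemma inU_lit {n} (U : {set lit n}) l : inU U l.1 = (l \in U) || (neg l \in U).
Proof. by case: l => v [] //=; rewrite /inU orbC. Qed.

Lemma prune_sat {n} (Phi G : seq (clause n)) :
  {subset G <= prune Phi} -> exists r, all (clause_sat r) G.
Proof.
move: (leqnn (size G)); move: {2}(size G) => m; elim: m G => [|m IH] G.
  by rewrite leqn0 => /nilP -> _; exists [ffun => false].
case: G => [|c0 G0] hs sG; first by exists [ffun => false].
set G := c0 :: G0.
set U := UP G [set c0.1].
have cons : forall y, y \in U -> neg y \in U -> False.
  by move=> y; apply: prune_consistent sG.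
set G' := [seq c <- G | ~~ (inU U c.1.1 || inU U c.2.1)].
have sz : size G' <= m.
  rewrite /G' /= inU_lit UP_self /= -ltnS size_filter.
  idtac.
  by apply: leq_trans hs; rewrite ltnS count_size.
have [r hr] := IH G' sz (fun c h => sG c (mem_subseq (filter_subseq _ _) h)).
exists (over U r); apply/allP => c cG.
case hc: (inU U c.1.1 || inU U c.2.1).
  have clo := UP_closed G [set c0.1].
  have step l l' : l' \in U -> has_clause G l l' -> l \in U.
    by move=> h1 h2; apply: UP_step h2.
  case: c cG hc => p q cG /=; rewrite /clause_sat /= !inU_lit.
  case/orP => /orP[hp|hp].
  - by rewrite over_in.
  - have hq : q \in U by apply: (step q (neg p) hp); apply/hasP; exists (p,q) => //; rewrite negK eqxx orbT.
    by rewrite (over_in _ cons hq) orbT.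
  - by rewrite (over_in _ cons hp) orbT.
  - have hq : p \in U by apply: (step p (neg q) hp); apply/hasP; exists (p,q) => //; rewrite negK eqxx.
    by rewrite (over_in _ cons hq).
have cG' : c \in G' by rewrite mem_filter hc cG.
move/allP: hr => /(_ c cG'); rewrite /clause_sat.
by move/negbT: hc => /norP[h1 h2]; rewrite !over_out.
Qed.

Definition twos {n} (N : {set lit n}) (v : 'I_n) := ((v,true) \in N) && ((v,false) \in N).
Definition tau {n} (N : {set lit n}) (r s : {ffun 'I_n -> bool}) : {ffun 'I_n -> bool} :=
  [ffun v => if twos N v then r v else if (v,true) \in N then true
             else if (v,false) \in N then false else s v].

Lemma twos_lit {n} (U : {set lit n}) l : twos U l.1 = (l \in U) && (neg l \in U).
Proof. by case: l => v [] //=; rewrite /twos andbC. Qed.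

Lemma tau_lit {n} (N : {set lit n}) r s l :
  lit_sat (tau N r s) l = if (l \in N) && (neg l \in N) then lit_sat r l
     else if l \in N then true else if neg l \in N then false else lit_sat s l.
Proof.
case: l => v []; rewrite /lit_sat ffunE /twos /neg /=;
by case: ((v,true) \in N); case: ((v,false) \in N) => //=; case: (r v); case: (s v).
Qed.

Lemma count_gen {n} (Phi A B : seq (clause n)) (N : {set lit n}) r :
  (forall l l', l' \in N -> has_clause Phi l l' -> l \in N) ->
  all (clause_sat r) B ->
  (forall c, c \in B -> (c \in Phi \/ twos N c.1.1 && twos N c.2.1) /\
       (~~ inU N c.1.1 -> ~~ inU N c.2.1 -> c \in A)) ->
  Zcount A <= expn 2 #|N| * Zcount B.
Proof.
move=> clo hr hB.
have key s : all (clause_sat s) A -> all (clause_sat (tau N r s)) B.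
  move=> hs; apply/allP => -[p q] cB.
  have hrc := allP hr _ cB.
  have [[cP|tw] hA] := hB _ cB; move: hA hrc => /= hA;
    rewrite /clause_sat /= !tau_lit; last first.
    by move: tw; rewrite !twos_lit => /andP[/andP[-> ->] /andP[-> ->]].
  have h1 : neg p \in N -> q \in N.
    by move=> h; apply: (clo q (neg p) h); apply/hasP; exists (p,q) => //; rewrite negK eqxx orbT.
  have h2 : neg q \in N -> p \in N.
    by move=> h; apply: (clo p (neg q) h); apply/hasP; exists (p,q) => //; rewrite negK eqxx.
  move=> hrc.
  have hs' : ~~ inU N p.1 -> ~~ inU N q.1 -> lit_sat s p || lit_sat s q.
    by move=> u1 u2; exact: (allP hs _ (hA u1 u2)).
  move: hs' h1 h2 hrc; rewrite !inU_lit.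
  by case: (p \in N); case: (neg p \in N); case: (q \in N); case: (neg q \in N) => //= ;
    move=> hs' h1 h2 hrc; rewrite ?orbT //; try (by have := h1 isT); try (by have := h2 isT); apply: hs'.
set SA := [set s : {ffun 'I_n -> bool} | all (clause_sat s) A].
set SB := [set s : {ffun 'I_n -> bool} | all (clause_sat s) B].
set W := [set x | inU N x].
pose g s := (tau N r s, [set x in W | s x]).
have inj : {in SA &, injective g}.
  move=> s1 s2 _ _ [e1 e2]; apply/ffunP => x.
  case hx: (inU N x).
    by move/setP: e2 => /(_ x); rewrite !inE hx.
  move/ffunP: e1 => /(_ x); rewrite !ffunE /twos.
  by move: hx; rewrite /inU; case: ((x,true) \in N); case: ((x,false) \in N).
have sub : g @: SA \subset setX SB (powerset W).
  apply/subsetP => _ /imsetP[s hs ->]; rewrite !inE key; last by move: hs; rewrite inE.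
  by apply/subsetP => x; rewrite inE => /andP[].
have cW : #|W| <= #|N|.
  apply: leq_trans (leq_imset_card (fun l : lit n => l.1) N).
  apply: subset_leq_card; apply/subsetP => x; rewrite inE /inU => /orP[h|h];
    by apply/imsetP; eexists; first exact: h.
rewrite /Zcount -/SA -/SB -(card_in_imset inj).
apply: leq_trans (subset_leq_card sub) _.
rewrite cardsX card_powerset mulnC leq_mul2r; apply/orP; right; exact: leq_pexp2l.
Qed.

Lemma N_big {n} (Phi : seq (clause n)) e m :
  m \in Nvar Phi e.1.1 :|: Nvar Phi e.2.1 -> UP Phi [set m] \subset Nclause Phi e.
Proof. by move=> hm; apply/subsetP => x hx; apply/bigcupP; exists m. Qed.

Lemma N_clo {n} (Phi : seq (clause n)) e l l' :
  l' \in Nclause Phi e -> has_clause Phi l l' -> l \in Nclause Phi e.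
Proof.
by move=> /bigcupP[m hm hl'] hc; apply/bigcupP; exists m => //; apply: UP_step hc.
Qed.

Lemma Nvar_of {n} (Phi : seq (clause n)) v l :
  inU (UP Phi [set l]) v -> l \in Nvar Phi v.
Proof. by rewrite inE. Qed.

Lemma N_var {n} (Phi : seq (clause n)) e (m : lit n) :
  (m.1 = e.1.1) \/ (m.1 = e.2.1) -> m \in Nclause Phi e.
Proof.
move=> hm.
have hm' : m \in Nvar Phi e.1.1 :|: Nvar Phi e.2.1.
  rewrite !inE; case: m hm => v s /= [->|->]; case: s; rewrite UP_self ?orbT //.
exact: (subsetP (N_big hm') m (UP_self _ _)).
Qed.

Lemma N_cases {n} (Phi : seq (clause n)) e l :
  UP (e :: Phi) [set l] \subset UP Phi [set l] \/ UP (e :: Phi) [set l] \subset Nclause Phi e.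
Proof.
case h: (inU (UP Phi [set l]) e.1.1 || inU (UP Phi [set l]) e.2.1).
- right; apply: UP_min.
    have hl : l \in Nvar Phi e.1.1 :|: Nvar Phi e.2.1.
      by rewrite inE; case/orP: h => /Nvar_of ->; rewrite ?orbT.
    by rewrite sub1set; exact: (subsetP (N_big hl) l (UP_self _ _)).
  apply: closedP => m m' hm'; rewrite /has_clause /= -/(has_clause Phi m m').
  case/orP => [/orP[/eqP he|/eqP he]|hc]; last by apply: N_clo hc.
    by apply: N_var; left; rewrite he.
  by apply: N_var; right; rewrite he.
- left; apply: UP_min; first by rewrite sub1set UP_self.
  apply: closedP => m m' hm'; rewrite /has_clause /= -/(has_clause Phi m m').
  case/orP => [/orP[/eqP he|/eqP he]|hc]; last by apply: UP_step hc.
    have X : inU (UP Phi [set l]) e.2.1 by rewrite he /= inU_lit hm' ?orbT.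
    by move: h; rewrite X orbT.
  have X : inU (UP Phi [set l]) e.1.1 by rewrite he /= inU_lit hm' ?orbT.
  by move: h; rewrite X.
Qed.

Lemma conflict_var_mono {n} (S T : {set lit n}) v :
  S \subset T -> conflict_var S v -> conflict_var T v.
Proof. by move=> /subsetP s /andP[h1 h2]; rewrite /conflict_var !s. Qed.

Lemma dir1 {n} (Phi : seq (clause n)) e :
  Zcount (prune Phi) <= expn 2 #|Nclause Phi e| * Zcount (prune (e :: Phi)).
Proof.
have [r hr] := prune_sat (G := prune (e :: Phi)) (fun c h => h).
apply: (count_gen (Phi := Phi) _ hr) => [l l'|c cB]; first exact: N_clo.
have cPsi := prune_sub cB.
case ce: (c == e).
  move/eqP: ce => ->; split; first by right; rewrite /twos !N_var ?orbT; auto.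
  by rewrite /inU N_var; auto.
move: cPsi; rewrite in_cons ce /= => cP; split; first by left.
move=> _ _; rewrite mem_filter cP andbT; apply/existsPn => l.
apply/negP => hc; move: (prune_noconf l cB); rewrite /conflict_clause.
move: hc; rewrite /conflict_clause => /andP[h1 h2].
have s : UP Phi [set l] \subset UP (e :: Phi) [set l].
  by apply: UP_mono => x hx; rewrite in_cons hx orbT.
by rewrite (conflict_var_mono s h1) (conflict_var_mono s h2).
Qed.

Lemma dir2 {n} (Phi : seq (clause n)) e :
  Zcount (prune (e :: Phi)) <= expn 2 #|Nclause Phi e| * Zcount (prune Phi).
Proof.
have [r hr] := prune_sat (G := prune Phi) (fun c h => h).
apply: (count_gen (Phi := Phi) _ hr) => [l l'|c cB]; first exact: N_clo.
have cP := prune_sub cB.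
split; first by left.
move=> u1 u2; rewrite mem_filter in_cons cP orbT andbT; apply/existsPn => l.
apply/negP => /andP[h1 h2].
case: (N_cases Phi e l) => s.
  move: (prune_noconf l cB); rewrite /conflict_clause.
  by rewrite (conflict_var_mono s h1) (conflict_var_mono s h2).
move: (conflict_var_mono s h1) => /andP[h _].
by move: u1; rewrite /inU h.
Qed.

Lemma expn_pow (m k : nat) : expn m k = Nat.pow m k.
Proof. elim: k => [|k IH] //=; by rewrite expnS IH multE. Qed.

Lemma ln_le' (x y : R) : (0 < x)%R -> (x <= y)%R -> (ln x <= ln y)%R.
Proof.
move=> hx /Rle_lt_or_eq_dec [h|->]; last by apply: Rle_refl.
by apply: Rlt_le; apply: ln_increasing.
Qed.

Lemma real_part (a b k : nat) : 0 < a -> 0 < b -> a <= expn 2 k * b -> b <= expn 2 k * a ->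
  (Rabs (ln (INR a) - ln (INR b)) <= INR k * ln 2)%R.
Proof.
move=> ha hb h1 h2.
have key (x y : nat) : 0 < x -> 0 < y -> x <= expn 2 k * y -> (ln (INR x) <= INR k * ln 2 + ln (INR y))%R.
  move=> hx hy hxy.
  have hy' : (0 < INR y)%R by apply: lt_0_INR; apply/ltP.
  have : (INR x <= INR (expn 2 k * y))%R by apply: le_INR; apply/leP.
  rewrite -multE mult_INR expn_pow pow_INR => hle.
  have hx' : (0 < INR x)%R by apply: lt_0_INR; apply/ltP.
  have h2k : (0 < INR 2 ^ k)%R by apply: pow_lt; simpl; lra.
  have := ln_le' hx' hle; rewrite ln_mult // ln_pow //; last (simpl; lra); simpl; lra.
apply: Rabs_le; split.
- have := key _ _ hb ha h2; lra.
- have := key _ _ ha hb h1; lra.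
Qed.

Theorem lemma11p1 (n : nat) (Phi : seq (clause n)) (e : clause n) :
  is2CNF Phi -> wf_clause e ->
  (Rabs (ln (INR (Zcount (prune Phi))) - ln (INR (Zcount (prune (e :: Phi)))))
     <= INR #|Nclause Phi e| * ln 2)%R.
Proof.
move=> _ _.
have [r hr] := prune_sat (G := prune Phi) (fun c h => h).
have [r' hr'] := prune_sat (G := prune (e :: Phi)) (fun c h => h).
apply: real_part; [ | | exact: dir1 | exact: dir2].
- by apply/card_gt0P; exists r; rewrite inE.
- by apply/card_gt0P; exists r'; rewrite inE.
Qed.
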